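(* Let $Z$ be a decision structure and $H$ a module of $Z$. Let $Z/H$ be the module contraction of $H$ in $Z$, in which the node $H$ is labelled by the derived action $(H_B,H_R)$ of the decision structure $Z[H]$ and each node $\{v\}$, $v\notin H$, is labelled by the action labelling $v$ in $Z$. Then $Z_B=(Z/H)_B$, i.e. $Z(w)_B(w)=(Z/H)(w)_B(w)$ for every state $w$.
   Context: Fix sets $\mathbb{W}$ (states), $\mathbb{S}$ (signals), $\mathcal{R}$ (return values). An action is a pair $\alpha=(\alpha_B,\alpha_R)$ with $\alpha_B:\mathbb{W}\to\mathbb{S}$, $\alpha_R:\mathbb{W}\to\mathcal{R}$. A decision structure is a finite directed acyclic graph $Z=(N,A)$, $A\subseteq N\times N$, with a unique source, an arc labelling $\ell:A\to\mathcal{R}$ and a node labelling $\eta$ by actions, such that distinct arcs leaving the same node have distinct labels; the arc out of $v$ labelled $r$, if it exists, is the $r$-arc out of $v$. For a state $w$, $Z(w)$ is computed by starting at the source and, at node $v$ with $\eta(v)=\alpha$, moving along the $\alpha_R(w)$-arc if it exists and otherwise outputting $\alpha$. The derived action of $Z$ is $(Z_B,Z_R)$ with $Z_B(w)=Z(w)_B(w)$ and $Z_R(w)=Z(w)_R(w)$. For $X\subseteq N$, $Z[X]$ is the induced subgraph with inherited labels. $X\subseteq N(Z)$ is a module if $Z[X]$ has a unique source and for every $v\notin X$: (i) every arc from $v$ into $X$ ends at the source of $Z[X]$; (ii) if some $x\in X$ has an $r$-labelled arc to $v$, then every $x'\in X$ has an $r$-arc ending at $v$ or in $X$. For a module $H$,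 the module contraction $Z/H$ is the graph with node set $\{H\}\cup\{\{v\}:v\notin H\}$ and an arc $(S,T)$, $S\ne T$, labelled $r$ whenever some $r$-labelled arc of $Z$ goes from a node of $S$ to a node of $T$ (this is a decision structure). *)

(* Defs.v *)
From mathcomp Require Import all_boot.
Set Implicit Arguments. Unset Strict Implicit. Unset Printing Implicit Defensive.

Section DecisionStructures.
Variables (W Sig : Type) (R : eqType).

(* An action alpha = (alpha_B, alpha_R). *)
Definition action := ((W -> Sig) * (W -> R))%type.

(* A (candidate) decision structure on a finite ambient node type V:
   node set [nodes], labelled arcs [arc u v r] = "there is an r-labelled arc
   from u to v", node labelling [eta]. *)
Record ds (V : finType) := DS {
  nodes : {set V};
  arc : V -> V -> R -> bool;
  eta : V -> action
}.

Variable V : finType.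
Implicit Types (Z : ds V) (X : {set V}).

Inductive reach Z : V -> V -> Prop :=
| reach_one u v r : arc Z u v r -> reach Z u v
| reach_step u v x r : arc Z u v r -> reach Z v x -> reach Z u x.

Definition is_source Z (s : V) : Prop :=
  s \in nodes Z /\ (forall u r, ~~ arc Z u s r).

(* Decision structure: finite DAG (A ⊆ N × N with an arc labelling, i.e. at
   most one label per ordered pair), unique source, and distinct arcs leaving
   the same node carry distinct labels. *)
Definition is_ds Z : Prop :=
  [/\ (forall u v r, arc Z u v r -> u \in nodes Z /\ v \in nodes Z),
      (forall v, ~ reach Z v v),
      (exists! s, is_source Z s),
      (forall u v r r', arc Z u v r -> arc Z u v r' -> r = r') &
      (forall u v v' r, arc Z u v r -> arc Z u v' r -> v = v')].

(* Evaluation Z(w) from a start node: follow the alpha_R(w)-arc while it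
   exists; fuel #|V| suffices on a DAG whose nodes lie in V. *)
Definition next Z (v : V) (w : W) : option V :=
  [pick u | arc Z v u ((eta Z v).2 w)].

Fixpoint run Z (n : nat) (v : V) (w : W) : action :=
  match n with
  | 0 => eta Z v
  | n'.+1 => match next Z v w with
             | Some u => run Z n' u w
             | None => eta Z v
             end
  end.

(* Z(w), computed from the source s of Z. *)
Definition out Z (s : V) (w : W) : action := run Z #|V| s w.

Definition derivedB Z s : W -> Sig := fun w => (out Z s w).1 w.
Definition derivedR Z s : W -> R := fun w => (out Z s w).2 w.
Definition derived Z s : action := (derivedB Z s, derivedR Z s).

Definition induced Z X : ds V :=
  DS (nodes Z :&: X) (fun u v r => [&& u \in X, v \in X & arc Z u v r]) (eta Z).

Definition is_module Z X : Prop :=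
  [/\ X \subset nodes Z,
      (exists! s, is_source (induced Z X) s),
      (forall v x r, v \in nodes Z -> v \notin X -> x \in X -> arc Z v x r ->
          is_source (induced Z X) x) &
      (forall v x r, v \in nodes Z -> v \notin X -> x \in X -> arc Z x v r ->
          forall x', x' \in X -> exists u, arc Z x' u r && ((u == v) || (u \in X)))].

End DecisionStructures.

(* Module contraction Z/H, on the ambient node type {set V}.  The node H is
   labelled by the derived action of Z[H] (computed from its source sH), each
   {v}, v notin H, by the label of v in Z. *)
Definition contract (W Sig : Type) (R : eqType) (V : finType)
    (Z : ds W Sig R V) (H : {set V}) (sH : V) : ds W Sig R {set V} :=
  let N := H |: [set [set v] | v in nodes Z :\: H] in
  DS N
     (fun S T r => [&& S \in N, T \in N, S != T &
                       [exists u in S, exists v in T, arc Z u v r]])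
     (fun T => if T == H then derived (induced Z H) sH
               else match [pick v in T] with
                    | Some v => eta Z v
                    | None => derived (induced Z H) sH
                    end).

(* Main.v *)
Require Import Defs.
From mathcomp Require Import all_boot.
From Stdlib Require ClassicalEpsilon Classical.
Set Implicit Arguments. Unset Strict Implicit. Unset Printing Implicit Defensive.

Section Gen.
Variables (W Sig : Type) (R : eqType) (V0 : finType) (Z0 : ds W Sig R V0) (w : W).

Inductive ends : V0 -> V0 -> nat -> Prop :=
| ends0 v : Defs.next Z0 v w = None -> ends v v 0
| endsS v u x k : Defs.next Z0 v w = Some u -> ends u x k -> ends v x k.+1.

Lemma ends_next v x k : ends v x k -> Defs.next Z0 x w = None.
Proof. by elim. Qed.

Lemma run_ends v x k n : ends v x k -> k <= n -> run Z0 n v w = eta Z0 x.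
Proof.
move=> E; elim: E n => [v0 Hn|v0 u x0 k0 Hn _ IH] [|n] //=; rewrite ?Hn //.
by move=> Hk; apply: IH.
Qed.

Lemma next_arc v u : Defs.next Z0 v w = Some u -> Defs.arc Z0 v u ((eta Z0 v).2 w).
Proof. by rewrite /Defs.next; case: pickP => // y Hy [<-]. Qed.

Lemma next_none v u : Defs.arc Z0 v u ((eta Z0 v).2 w) -> Defs.next Z0 v w <> None.
Proof. by rewrite /Defs.next; case: pickP => // /(_ u) ->. Qed.

Lemma next_unique v u : Defs.arc Z0 v u ((eta Z0 v).2 w) ->
  (forall u', Defs.arc Z0 v u' ((eta Z0 v).2 w) -> u' = u) -> Defs.next Z0 v w = Some u.
Proof.
move=> Ha Hu; rewrite /Defs.next; case: pickP => [y Hy|H0]; first by rewrite (Hu y Hy).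
by rewrite H0 in Ha.
Qed.

Definition asb (P : Prop) : bool := if ClassicalEpsilon.excluded_middle_informative P then true else false.
Lemma asbP P : asb P <-> P.
Proof. by rewrite /asb; case: ClassicalEpsilon.excluded_middle_informative. Qed.

Definition rs v : {set V0} := [set y | asb (reach Z0 v y)].
Lemma in_rs v y : (y \in rs v) <-> reach Z0 v y.
Proof. by rewrite inE asbP. Qed.

Lemma ends_exists : (forall v, ~ reach Z0 v v) ->
  forall v, exists x k, ends v x k /\ k < #|V0|.
Proof.
move=> acyc.
have main : forall n v, #|rs v| <= n -> exists x k, ends v x k /\ k <= #|rs v|.
  elim=> [|n IH] v Hv;
  (case Hn: (Defs.next Z0 v w) => [u|]; last by exists v, 0; split => //; exact: ends0);
  have Ha := next_arc Hn;
  (have pr : rs u \proper rs v by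
    apply/properP; split; [
      by apply/subsetP => y /in_rs Hy; apply/in_rs; apply: reach_step Ha Hy
    | exists u; [by apply/in_rs; apply: reach_one Ha | by apply/negP => /in_rs /acyc]]);
  have lt := proper_card pr.
    by move: (leq_trans lt Hv).
  have [x [k [E Hk]]] := IH u (leq_trans lt Hv).
  by exists x, k.+1; split; [apply: endsS Hn E | apply: leq_ltn_trans lt].
move=> v; have [x [k [E Hk]]] := main _ v (leqnn _).
exists x, k; split => //; apply: leq_ltn_trans Hk _.
rewrite -cardsT; apply: proper_card; rewrite properT; apply/eqP => Heq.
by move: (in_setT v); rewrite -Heq => /in_rs /acyc.
Qed.

Lemma ends_invS v x k u : ends v x k -> Defs.next Z0 v w = Some u ->
  exists k', k = k'.+1 /\ ends u x k'.
Proof.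
case=> [v0 Hn|v0 u0 x0 k0 Hn E]; first by rewrite Hn.
by rewrite Hn => -[<-]; exists k0.
Qed.

Lemma ends_inv0 v x k : ends v x k -> Defs.next Z0 v w = None -> x = v /\ k = 0.
Proof. by case=> [v0 Hn|v0 u0 x0 k0 Hn E] //; rewrite Hn. Qed.
End Gen.
Section Main.
Variables (W Sig : Type) (R : eqType) (V : finType) (Z : ds W Sig R V) (H : {set V}) (sH : V) (w : W).
Notation C := (contract Z H sH).
Notation I := (induced Z H).
Definition phi v := if v \in H then H else [set v].

Lemma reach_ind u v : reach I u v -> reach Z u v.
Proof.
elim=> [u0 v0 r /and3P [_ _ Ha]|u0 v0 x r /and3P [_ _ Ha] _ IH].
  exact: reach_one Ha.
exact: reach_step Ha IH.
Qed.

Lemma nodesC T : T \in nodes C <-> T = H \/ exists2 v, v \in nodes Z & v \notin H /\ T = [set v].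
Proof.
rewrite /= in_setU1; split.
  case/orP => [/eqP->|/imsetP [v /setDP [vN vH] ->]]; [by left | by right; exists v].
case=> [->|[v vN [vH ->]]]; first by rewrite eqxx.
by apply/orP; right; apply/imsetP; exists v => //; apply/setDP.
Qed.

Lemma set1_neqH v : v \notin H -> ([set v] == H) = false.
Proof. by move=> vH; apply/eqP => E; move: (set11 v); rewrite E (negbTE vH). Qed.

Lemma etaC1 v : v \notin H -> eta C [set v] = eta Z v.
Proof.
move=> vH /=; rewrite set1_neqH //.
by case: pickP => [y /set1P ->|/(_ v)]; rewrite ?set11.
Qed.

Lemma etaCH : eta C H = derived I sH.
Proof. by rewrite /= eqxx. Qed.

Lemma HW (Hdet : forall u v v' r, Defs.arc Z u v r -> Defs.arc Z u v' r -> v = v')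
  y x k : y \in H -> ends Z w y x k ->
  (x \in H /\ ends I w y x k) \/
  exists y' u m k', [/\ y' \in H, u \notin H, ends I w y y' m,
     Defs.next Z y' w = Some u & ends Z w u x k' /\ k = m + k'.+1].
Proof.
move=> yH E; elim: E yH => [v Hn|v u x0 k0 Hn E IH] vH.
  left; split => //; apply: ends0.
  rewrite /Defs.next; case: pickP => // u /and3P [_ _ Ha].
  by have := next_none Ha; rewrite Hn.
have Ha := next_arc Hn.
case uH: (u \in H).
  have HnI : Defs.next I v w = Some u.
    apply: next_unique => [|u' /and3P [_ _ Ha']]; first by rewrite /= vH uH.
    exact: Hdet Ha' Ha.
  case: (IH uH) => [[xH EI]|[y' [u1 [m [k' [y'H u1H EI Hn' [Eu ->]]]]]]].
    by left; split => //; apply: endsS HnI EI.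
  by right; exists y', u1, m.+1, k'; split => //; try exact: (endsS HnI EI); split.
right; exists v, u, 0, k0; split => //; try by rewrite uH.
apply: ends0; rewrite /Defs.next; case: pickP => // u' /and3P [_ u'H Ha'].
by move: (Hdet _ _ _ _ Ha' Ha) uH => <-; rewrite u'H.
Qed.

Lemma Sim (Hds : is_ds Z) (Hmod : is_module Z H) (HsH : is_source I sH) :
  forall k v x, k < #|V| -> v \in nodes Z -> (v \in H -> v = sH) -> ends Z w v x k ->
  exists X j, [/\ j <= k, ends C w (phi v) X j & (eta C X).1 w = (eta Z x).1 w].
Proof.
case: Hds => Hnodes Hacyc _ _ Hdet.
case: Hmod => _ [s1 [Hs1 Us1]] Hm3 Hm4.
have sHH : sH \in H by case: HsH => /setIP [_ ->].
have srcI : forall y, is_source I y -> y = sH by move=> y Hy; rewrite -(Us1 _ Hy) (Us1 _ HsH).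
elim/ltn_ind => k IH v x kV vN vsH E.
case vH: (v \in H).
  have vs := vsH vH; subst v; rewrite /phi sHH.
  case: (HW Hdet sHH E) => [[xH EI]|[y' [u [m [k' [y'H uH EI Hn [Eu Ek]]]]]]].
    have Hd1 : derivedB I sH w = (eta Z x).1 w by rewrite /derivedB /out (run_ends EI) // ltnW.
    have Hd2 : derivedR I sH w = (eta Z x).2 w by rewrite /derivedR /out (run_ends EI) // ltnW.
    exists H, 0; split => //; last by rewrite etaCH /= Hd1.
    apply: ends0; rewrite /Defs.next; case: pickP => // T; rewrite etaCH /= Hd2.
    move=> /and4P [_ TN HT /existsP [u /andP [uH /existsP [v' /andP [v'T Ha]]]]].
    case/nodesC: TN => [TH|[v'' v''N [v''H TE]]]; first by rewrite TH eqxx in HT.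
    rewrite TE in v'T; move/set1P: v'T => ev'; subst v'.
    have [u' /andP [Ha' _]] := Hm4 _ _ _ v''N v''H uH Ha x xH.
    by have := next_none Ha'; rewrite (ends_next E).
  have mk : m < k by rewrite Ek addnS ltnS leq_addr.
  have Hd1 : derivedB I sH w = (eta Z y').1 w.
    by rewrite /derivedB /out (run_ends EI) // ltnW // (ltn_trans mk kV).
  have Hd2 : derivedR I sH w = (eta Z y').2 w.
    by rewrite /derivedR /out (run_ends EI) // ltnW // (ltn_trans mk kV).
  have Ha := next_arc Hn.
  have uN : u \in nodes Z by case: (Hnodes _ _ _ Ha).
  have HnC : Defs.next C H w = Some [set u].
    apply: next_unique; rewrite etaCH /= Hd2.
      apply/and4P; split.
      - by apply/nodesC; left.
      - by apply/nodesC; right; exists u.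
      - by rewrite eq_sym set1_neqH.
      - apply/existsP; exists y'; rewrite y'H /=; apply/existsP; exists u; by rewrite set11 Ha.
    move=> T /and4P [_ TN HT /existsP [u0 /andP [u0H /existsP [v' /andP [v'T Ha0]]]]].
    case/nodesC: TN => [TH|[v'' v''N [v''H TE]]]; first by rewrite TH eqxx in HT.
    subst T; move/set1P: v'T => ev'; subst v'.
    have [u' /andP [Ha' /orP [/eqP eu'|u'H]]] := Hm4 _ _ _ v''N v''H u0H Ha0 y' y'H.
      by subst u'; rewrite (Hdet _ _ _ _ Ha Ha').
    by move: (Hdet _ _ _ _ Ha' Ha) u'H => ->; rewrite (negbTE uH).
  have k'k : k' < k by rewrite Ek addnS ltnS leq_addl.
  have [X [j [jk EC Heta]]] := IH k' k'k u x (ltn_trans k'k kV) uN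
     (fun h => False_ind _ (elimT negP uH h)) Eu.
  rewrite /phi (negbTE uH) in EC.
  exists X, j.+1; split => //; last exact: endsS HnC EC.
  by rewrite Ek addnS ltnS (leq_trans jk (leq_addl _ _)).
have vH' : v \notin H by rewrite vH.
rewrite /phi vH.
case Hn: (Defs.next Z v w) => [u|]; last first.
  have [-> ->] := ends_inv0 E Hn.
  exists [set v], 0; split => //; last by rewrite etaC1.
  apply: ends0; rewrite /Defs.next; case: pickP => // T; rewrite etaC1 //.
  move=> /and4P [_ _ _ /existsP [u0 /andP [/set1P -> /existsP [v' /andP [_ Ha0]]]]].
  by have := next_none Ha0; rewrite Hn.
have [k' [Ek Eu]] := ends_invS E Hn.
have Ha := next_arc Hn.
have uN : u \in nodes Z by case: (Hnodes _ _ _ Ha).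
have usH : u \in H -> u = sH by move=> uH; apply: srcI; apply: (Hm3 _ _ _ vN vH' uH Ha).
have HnC : Defs.next C [set v] w = Some (phi u).
  apply: next_unique; rewrite etaC1 //.
    apply/and4P; split.
    - by apply/nodesC; right; exists v.
    - by apply/nodesC; rewrite /phi; case uH: (u \in H); [left | right; exists u; rewrite ?uH].
    - rewrite /phi; case uH: (u \in H); first by rewrite set1_neqH.
      apply/eqP => /set1_inj evu; subst u.
      by apply: (Hacyc v); apply: reach_one Ha.
    - apply/existsP; exists v; rewrite set11 /=; apply/existsP; exists u.
      by rewrite Ha andbT /phi; case: ifP => // _; rewrite set11.
  move=> T /and4P [_ TN HT /existsP [u0 /andP [/set1P -> /existsP [v' /andP [v'T Ha0]]]]].
  have ev := Hdet _ _ _ _ Ha0 Ha; subst v'.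
  case/nodesC: TN => [TH|[t tN [tH TE]]].
    by subst T; rewrite /phi v'T.
  by subst T; move/set1P: v'T => ->; rewrite /phi (negbTE tH).
have k'k : k' < k by rewrite Ek.
have [X [j [jk EC Heta]]] := IH k' k'k u x (ltn_trans k'k kV) uN usH Eu.
by exists X, j.+1; split => //; [rewrite Ek | exact: endsS HnC EC].
Qed.
End Main.

Theorem mainTheorem15 (W Sig : Type) (R : eqType) (V : finType)
    (Z : ds W Sig R V) (H : {set V}) (s sH : V) (sQ : {set V}) :
  is_ds Z -> is_module Z H ->
  is_source Z s -> is_source (induced Z H) sH ->
  is_source (contract Z H sH) sQ ->
  forall w : W, derivedB Z s w = derivedB (contract Z H sH) sQ w.
Proof.
move=> Hds Hmod Hs HsH HsQ w.
have Hds' := Hds; case: Hds' => Hnodes Hacyc [s0 [_ U0]] _ _.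
have Hmod' := Hmod; case: Hmod' => _ [s1 [_ Us1]] _ _.
have srcI : forall y, is_source (induced Z H) y -> y = sH.
  by move=> y Hy; rewrite -(Us1 _ Hy) (Us1 _ HsH).
have srcZ : forall y, is_source Z y -> y = s by move=> y Hy; rewrite -(U0 _ Hy) (U0 _ Hs).
have inc : forall v, v \in nodes Z -> v <> s -> exists u r, Defs.arc Z u v r.
  move=> v vN vs; apply: Classical_Prop.NNPP => Hno; apply: vs; apply: srcZ; split => // u r.
  by apply/negP => Ha; apply: Hno; exists u, r.
have sHH : sH \in H by case: HsH => /setIP [_ ->].
have sHN : sH \in nodes Z by case: HsH => /setIP [-> _].
have ssH : s \in H -> s = sH.
  move=> sH'; apply: srcI; split; first by case: Hs => sN _; apply/setIP.
  by move=> u r; apply/negP => /and3P [_ _ Ha]; case: Hs => _ /(_ u r) /negP.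
have sN : s \in nodes Z by case: Hs.
have [x [k [E kV]]] := ends_exists w Hacyc s.
have HsQe : sQ = phi H s.
  case: HsQ => sQN sQno.
  case/nodesC: sQN => [Heq|[v vN [vH Heq]]]; subst sQ.
    rewrite /phi; case sH': (s \in H) => //; exfalso.
    have [u [r Ha]] : exists u r, Defs.arc Z u sH r.
      by apply: inc => // e; rewrite e sH' in sHH.
    have uN : u \in nodes Z by case: (Hnodes _ _ _ Ha).
    have uH : u \notin H.
      by apply/negP => uH; case: HsH => _ /(_ u r) /negP; apply; rewrite /= uH sHH.
    move/negP: (sQno [set u] r); apply.
    apply/and4P; split.
    - by apply/(@nodesC W Sig R V Z H sH); right; exists u.
    - by apply/(@nodesC W Sig R V Z H sH); left.
    - by rewrite set1_neqH.
    - apply/existsP; exists u; rewrite set11 /=; apply/existsP; exists sH; by rewrite sHH Ha.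
  case: (eqVneq v s) => [evs | vs]; first by subst v; rewrite /phi (negbTE vH).
  exfalso; have [u [r Ha]] := inc v vN (fun e => ltac:(by rewrite e eqxx in vs)).
  have uN : u \in nodes Z by case: (Hnodes _ _ _ Ha).
  move/negP: (sQno (phi H u) r); apply.
  apply/and4P; split.
  - by apply/(@nodesC W Sig R V Z H sH); rewrite /phi; case uH: (u \in H); [left | right; exists u; rewrite ?uH].
  - by apply/(@nodesC W Sig R V Z H sH); right; exists v.
  - rewrite /phi; case uH: (u \in H); first by rewrite eq_sym set1_neqH.
    apply/eqP => /set1_inj evu; subst u.
    by apply: (Hacyc v); apply: reach_one Ha.
  - apply/existsP; exists u.
    rewrite (_ : u \in phi H u = true) /=; last by rewrite /phi; case: ifP => // _; exact: set11.
    by apply/existsP; exists v; rewrite set11 Ha.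
have [X [j [jk EC Heta]]] := Sim Hds Hmod HsH kV sN ssH E.
rewrite /derivedB /out (run_ends E (ltnW kV)) HsQe (run_ends EC) //.
apply: leq_trans (ltnW (leq_ltn_trans jk kV)) _.
by apply: (@leq_card V _ (@set1 V)); exact: set1_inj.
Qed.
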